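(* Let $q=3$, with $G_3$-orbits of lines $\mathcal L_1,\dots,\mathcal L_7$ and of points $\mathcal M_1,\dots,\mathcal M_4$ as in the context. For each pair $(\mathcal L_i,\mathcal M_j)$ every line of $\mathcal L_i$ contains exactly $t_{ij}$ points of $\mathcal M_j$ and every point of $\mathcal M_j$ lies on exactly $b_{ij}$ lines of $\mathcal L_i$, where, listing $(t_{ij},b_{ij})$ for $j=4,1,3,2$ in this order: $\mathcal L_1$: $(2,1),(2,3),(0,0),(0,0)$; $\mathcal L_2$: $(2,2),(0,0),(2,3),(0,0)$; $\mathcal L_3$: $(0,0),(1,4),(2,4),(1,1)$; $\mathcal L_4$: $(0,0),(0,0),(0,0),(4,2)$; $\mathcal L_5$: $(1,2),(1,6),(0,0),(2,3)$; $\mathcal L_6$: $(1,4),(0,0),(1,6),(2,6)$; $\mathcal L_7$: $(3,4),(0,0),(0,0),(1,1)$.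
   Context: Notation. $\mathbb F_q$ is the field with $q$ elements, $\mathbb F_q^+=\mathbb F_q\cup\{\infty\}$. Points of $\mathrm{PG}(3,q)$ are written $\mathbf P(x_0,x_1,x_2,x_3)$ with $x$ a nonzero row vector up to scalars; $\boldsymbol\pi(c_0,c_1,c_2,c_3)$ is the plane $c_0x_0+c_1x_1+c_2x_2+c_3x_3=0$. Put $P(t)=\mathbf P(t^3,t^2,t,1)$ for $t\in\mathbb F_q$, $P(\infty)=\mathbf P(1,0,0,0)$, and $\mathscr C=\{P(t):t\in\mathbb F_q^+\}$ (the twisted cubic). The osculating planes are $\pi_{\rm osc}(t)=\boldsymbol\pi(1,-3t,3t^2,-t^3)$ ($t\in\mathbb F_q$) and $\pi_{\rm osc}(\infty)=\boldsymbol\pi(0,0,0,1)$; these $q+1$ planes are called $\Gamma$-planes. The tangent at $P(t)$, $t\in\mathbb F_q$, is the line through $P(t)$ and $\mathbf P(3t^2,2t,1,0)$; the tangent at $P(\infty)$ is the line through $\mathbf P(1,0,0,0)$ and $\mathbf P(0,1,0,0)$. A real chord is a line through two distinct points of $\mathscr C$. For $\alpha\in\mathbb F_{q^2}\setminus\mathbb F_q$, the line of $\mathrm{PG}(3,q^2)$ through $P(\alpha),P(\alpha^q)$ is defined over $\mathbb F_q$, and the corresponding line of $\mathrm{PG}(3,q)$ is an imaginary chord. A unisecant is a line meeting $\mathscr C$ in exactly one point; an external line is a line disjoint from $\mathscr C$. $G_q$ is the group of all projectivities of $\mathrm{PG}(3,q)$ mapping $\mathscr C$ onto itself. $G_3^*$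 is the subgroup of $G_3$ of projectivities $\mathbf P(x)\mapsto\mathbf P(xM)$ with $M=M(a,b,c,d)$ having rows $(a^3,a^2c,ac^2,c^3)$, $(3a^2b,a^2d+2abc,bc^2+2acd,3c^2d)$, $(3ab^2,b^2c+2abd,ad^2+2bcd,3cd^2)$, $(b^3,b^2d,bd^2,d^3)$, $ad-bc\neq0$. For $q=3$ all four $\Gamma$-planes contain the line $\mathcal A:\ x_0=x_3=0$. Point types for $q=3$: $\mathscr C$-point = point of $\mathscr C$; $4_\Gamma$-point = point of $\mathcal A$; TO-point = point not in $\mathscr C\cup\mathcal A$ lying on a tangent; RC-point = point not in $\mathscr C\cup\mathcal A$, on no tangent, lying on a real chord; IC-point = any point of none of the previous types. Line types for $q=3$: RC = real chord; Tr = tangent; IC = imaginary chord; Ar = the line $\mathcal A$; U$\Gamma$ = unisecant which is not a tangent and is contained in some $\Gamma$-plane; Un$\Gamma$ = unisecant contained in no $\Gamma$-plane; EA = external line different from $\mathcal A$ meeting $\mathcal A$; En$\Gamma$ = external line not meeting $\mathcal A$ which is not an imaginary chord. Sub-types: Un$\Gamma_1$, Un$\Gamma_2$ = $G_3^*$-orbits of $\{x_1=-x_2,x_1=-x_3\}$, $\{x_2=0,x_1=-x_3\}$; EA$_2$, EA$_3$ = $G_3^*$-orbits of $\{x_0=0,x_1=-x_3\}$, $\{x_0=x_2,x_3=0\}$, EA$_1$ = remaining EA-lines; En$\Gamma_3$ = $G_3^*$-orbit of $\{x_0=x_2,x_1=-x_3\}$, and the remaining En$\Gamma$-lines form two $G_3^*$-orbits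 En$\Gamma_2$ (size 12) and En$\Gamma_1$ (size 24). The $G_3$-orbits are: points $\mathcal M_1=\{\mathscr C\text{-points}\}$ (4), $\mathcal M_2=\{4_\Gamma\text{- and IC-points}\}$ (16), $\mathcal M_3=\{\text{TO-points}\}$ (8), $\mathcal M_4=\{\text{RC-points}\}$ (12); lines $\mathcal L_1=\{\text{RC}\}$ (6), $\mathcal L_2=\text{En}\Gamma_2$ (12), $\mathcal L_3=\{\text{Tr}\}\cup\text{Un}\Gamma_2$ (16), $\mathcal L_4=\{\text{IC}\}\cup\{\mathcal A\}\cup\text{EA}_2$ (8), $\mathcal L_5=\{\text{U}\Gamma\}\cup\text{Un}\Gamma_1$ (24), $\mathcal L_6=\text{EA}_1\cup\text{En}\Gamma_1$ (48), $\mathcal L_7=\text{EA}_3\cup\text{En}\Gamma_3$ (16). *)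

(* Defs.v *)
(* The projective space PG(3,3) is modelled as the lattice
   of subspaces of F_3^4 (row vectors): a point is a 1-dimensional subspace,
   a line a 2-dimensional subspace, both as finite sets of vectors (0 included);
   incidence is inclusion. *)
From HB Require Import structures.
From mathcomp Require Import all_boot all_order all_algebra.
Set Implicit Arguments. Unset Strict Implicit. Unset Printing Implicit Defensive.
Import Order.TTheory GRing.Theory Num.Theory.
Local Open Scope ring_scope.

Notation F := 'F_3.
Notation vec := 'rV[F]_4.

Definition mkv (a b c d : F) : vec := \row_(i < 4) nth 0 [:: a; b; c; d] i.

Definition span1 (v : vec) : {set vec} := [set a *: v | a : F].
Definition span2 (u v : vec) : {set vec} := [set a *: u + b *: v | a : F, b : F].

Definition is_point (P : {set vec}) : bool :=
  [exists v : vec, (v != 0) && (P == span1 v)].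
Definition is_line (L : {set vec}) : bool :=
  [exists u : vec, exists v : vec, [&& u != 0, v \notin span1 u & L == span2 u v]].

Definition plane (c : vec) : {set vec} := [set x : vec | \sum_(i < 4) c 0 i * x 0 i == 0].

(* parameters t in F_q^+ = F_q u {oo}: None stands for oo *)
Definition Pt (t : option F) : vec :=
  if t is Some t then mkv (t ^+ 3) (t ^+ 2) t 1 else mkv 1 0 0 0.
Definition osc (t : option F) : vec :=
  if t is Some t then mkv 1 (- (3%:R * t)) (3%:R * t ^+ 2) (- t ^+ 3) else mkv 0 0 0 1.
Definition tdir (t : option F) : vec :=
  if t is Some t then mkv (3%:R * t ^+ 2) (2%:R * t) 1 0 else mkv 0 1 0 0.
Definition tangent (t : option F) : {set vec} := span2 (Pt t) (tdir t).

Definition Aline : {set vec} := [set x : vec | (x 0 0 == 0) && (x 0 3 == 0)].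

Definition Cpoint (P : {set vec}) : bool := [exists t, P == span1 (Pt t)].
Definition Gamma4point (P : {set vec}) : bool := P \subset Aline.
Definition on_tangent (P : {set vec}) : bool := [exists t, P \subset tangent t].
Definition on_real_chord (P : {set vec}) : bool :=
  [exists t1, exists t2, (t1 != t2) && (P \subset span2 (Pt t1) (Pt t2))].
Definition TOpoint P := [&& ~~ Cpoint P, ~~ Gamma4point P & on_tangent P].
Definition RCpoint P :=
  [&& ~~ Cpoint P, ~~ Gamma4point P, ~~ on_tangent P & on_real_chord P].
Definition ICpoint P :=
  [&& ~~ Cpoint P, ~~ Gamma4point P, ~~ TOpoint P & ~~ RCpoint P].

(* ---------- imaginary chords ----------
   F_9 is modelled as F_3(i), i^2 = -1, elements a + b i encoded as pairs (a,b). *)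
Definition cmul (x y : F * F) : F * F :=
  (x.1 * y.1 - x.2 * y.2, x.1 * y.2 + x.2 * y.1).
(* P(alpha) = U + i V with U, V in F_3^4; alpha = a + b i *)
Definition ReP (a b : F) : vec :=
  let al := (a, b) in let a2 := cmul al al in let a3 := cmul a2 al in
  mkv a3.1 a2.1 a 1.
Definition ImP (a b : F) : vec :=
  let al := (a, b) in let a2 := cmul al al in let a3 := cmul a2 al in
  mkv a3.2 a2.2 b 0.
(* the F_9-line through P(alpha), P(alpha^3) is spanned by U and V; its
   F_3-points form span2 U V *)
Definition IC_line (L : {set vec}) : bool :=
  [exists a : F, exists b : F, (b != 0) && (L == span2 (ReP a b) (ImP a b))].

Definition RC_line (L : {set vec}) : bool :=
  [exists t1, exists t2, (t1 != t2) && (L == span2 (Pt t1) (Pt t2))].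
Definition Tr_line (L : {set vec}) : bool := [exists t, L == tangent t].
Definition ncurve (L : {set vec}) : nat := #|[set t | span1 (Pt t) \subset L]|.
Definition in_Gamma_plane (L : {set vec}) : bool := [exists t, L \subset plane (osc t)].
Definition meets_A (L : {set vec}) : bool := [exists v : vec, [&& v != 0, v \in L & v \in Aline]].
Definition UGamma L := [&& ncurve L == 1%N, ~~ Tr_line L & in_Gamma_plane L].
Definition UnGamma L := (ncurve L == 1%N) && ~~ in_Gamma_plane L.
Definition EA_line L := [&& ncurve L == 0%N, L != Aline & meets_A L].
Definition EnGamma L := [&& ncurve L == 0%N, ~~ meets_A L & ~~ IC_line L].

Definition Mabcd (a b c d : F) : 'M[F]_4 :=
  \matrix_(i < 4, j < 4) nth 0 (nth [::] [::
    [:: a ^+ 3; a ^+ 2 * c; a * c ^+ 2; c ^+ 3];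
    [:: 3%:R * a ^+ 2 * b; a ^+ 2 * d + 2%:R * a * b * c;
        b * c ^+ 2 + 2%:R * a * c * d; 3%:R * c ^+ 2 * d];
    [:: 3%:R * a * b ^+ 2; b ^+ 2 * c + 2%:R * a * b * d;
        a * d ^+ 2 + 2%:R * b * c * d; 3%:R * c * d ^+ 2];
    [:: b ^+ 3; b ^+ 2 * d; b * d ^+ 2; d ^+ 3]] i) j.
Definition Gstar_image (M : 'M[F]_4) (L : {set vec}) : {set vec} := [set x *m M | x in L].
Definition in_Gstar_orbit (L0 L : {set vec}) : bool :=
  [exists a : F, exists b : F, exists c : F, exists d : F,
     (a * d - b * c != 0) && (L == Gstar_image (Mabcd a b c d) L0)].
Definition Gstar_orbit (L0 : {set vec}) : {set {set vec}} := [set L | in_Gstar_orbit L0 L].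

Definition UnG1_rep : {set vec} := [set x : vec | (x 0 1 == - x 0 2) && (x 0 1 == - x 0 3)].
Definition UnG2_rep : {set vec} := [set x : vec | (x 0 2 == 0) && (x 0 1 == - x 0 3)].
Definition EA2_rep : {set vec} := [set x : vec | (x 0 0 == 0) && (x 0 1 == - x 0 3)].
Definition EA3_rep : {set vec} := [set x : vec | (x 0 0 == x 0 2) && (x 0 3 == 0)].
Definition EnG3_rep : {set vec} := [set x : vec | (x 0 0 == x 0 2) && (x 0 1 == - x 0 3)].

Definition UnGamma1 L := in_Gstar_orbit UnG1_rep L.
Definition UnGamma2 L := in_Gstar_orbit UnG2_rep L.
Definition EA2 L := in_Gstar_orbit EA2_rep L.
Definition EA3 L := in_Gstar_orbit EA3_rep L.
Definition EA1 L := [&& EA_line L, ~~ EA2 L & ~~ EA3 L].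
Definition EnGamma3 L := in_Gstar_orbit EnG3_rep L.
Definition EnGamma_rest L := EnGamma L && ~~ EnGamma3 L.
Definition EnGamma2 L := EnGamma_rest L && (#|Gstar_orbit L| == 12%N).
Definition EnGamma1 L := EnGamma_rest L && (#|Gstar_orbit L| == 24%N).

Definition Mclass (j : nat) (P : {set vec}) : bool :=
  match j with
  | 1 => Cpoint P
  | 2 => Gamma4point P || ICpoint P
  | 3 => TOpoint P
  | 4 => RCpoint P
  | _ => false
  end%N.

Definition Lclass (i : nat) (L : {set vec}) : bool :=
  match i with
  | 1 => RC_line L
  | 2 => EnGamma2 L
  | 3 => Tr_line L || UnGamma2 L
  | 4 => [|| IC_line L, L == Aline | EA2 L]
  | 5 => UGamma L || UnGamma1 L
  | 6 => EA1 L || EnGamma1 L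
  | 7 => EA3 L || EnGamma3 L
  | _ => false
  end%N.

Definition tb (i j : nat) : nat * nat :=
  match i, j with
  | 1, 4 => (2, 1) | 1, 1 => (2, 3) | 1, 3 => (0, 0) | 1, 2 => (0, 0)
  | 2, 4 => (2, 2) | 2, 1 => (0, 0) | 2, 3 => (2, 3) | 2, 2 => (0, 0)
  | 3, 4 => (0, 0) | 3, 1 => (1, 4) | 3, 3 => (2, 4) | 3, 2 => (1, 1)
  | 4, 4 => (0, 0) | 4, 1 => (0, 0) | 4, 3 => (0, 0) | 4, 2 => (4, 2)
  | 5, 4 => (1, 2) | 5, 1 => (1, 6) | 5, 3 => (0, 0) | 5, 2 => (2, 3)
  | 6, 4 => (1, 4) | 6, 1 => (0, 0) | 6, 3 => (1, 6) | 6, 2 => (2, 6)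
  | 7, 4 => (3, 4) | 7, 1 => (0, 0) | 7, 3 => (0, 0) | 7, 2 => (1, 1)
  | _, _ => (0, 0)
  end%N.

(* Main.v *)
Require Import Defs.
From mathcomp Require Import all_boot all_order all_algebra.
Set Implicit Arguments. Unset Strict Implicit. Unset Printing Implicit Defensive.
Import GRing.Theory.

(* Strategy: PG(3,3) is finite; we build a computable model
   (vectors as 4-tuples of nats mod 3, sets as filtered lists of model vectors),
   prove that every notion is faithfully reflected by the model, and
   then check the whole incidence table by computation (vm_compute). *)

Local Open Scope ring_scope.

Definition fv (a : F) : nat := nat_of_ord a.
Definition Fl : seq F := [:: 0; 1; 2%:R].
Definition Nl : seq nat := [:: 0; 1; 2]%N.
Definition mv := (nat * nat * nat * nat)%type.
Definition menum : seq mv :=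
  [seq (x, d) | x <- [seq (y, c) | y <- [seq (a, b) | a <- Nl, b <- Nl], c <- Nl], d <- Nl].
Definition m3 (n : nat) : nat := (n %% 3)%N.
Definition ma (a b : nat) := m3 (a + b).
Definition mm (a b : nat) := m3 (a * b).
Definition mn (a : nat) := m3 (3 - a).
Definition msc (a : nat) (x : mv) : mv :=
  let: (x0, x1, x2, x3) := x in (mm a x0, mm a x1, mm a x2, mm a x3).
Definition madd (x y : mv) : mv :=
  let: (x0, x1, x2, x3) := x in let: (y0, y1, y2, y3) := y in
  (ma x0 y0, ma x1 y1, ma x2 y2, ma x3 y3).
Definition ofv (v : vec) : mv := (fv (v 0 0), fv (v 0 1), fv (v 0 2), fv (v 0 3)).
Definition inF (n : nat) : F := n%:R.
Definition tov (x : mv) : vec :=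
  let: (x0, x1, x2, x3) := x in mkv (inF x0) (inF x1) (inF x2) (inF x3).

Lemma fv_lt (a : F) : (fv a < 3)%N.
Proof. exact: ltn_ord. Qed.

Lemma fv_eqE (a b : F) : (a == b) = (fv a == fv b).
Proof. by []. Qed.

Lemma fv_inj (a b : F) : fv a = fv b -> a = b.
Proof. by move=> h; apply/eqP; rewrite fv_eqE h. Qed.

Lemma FlP (a : F) : a \in Fl.
Proof.
have := fv_lt a; have h := @fv_inj a.
case E: (fv a) => [|[|[|n]]] // _.
- by rewrite (h 0%R) ?inE ?eqxx.
- by rewrite (h 1%R) ?inE ?eqxx ?orbT.
- by rewrite (h 2%:R) ?inE ?eqxx ?orbT.
Qed.

Lemma allF (P : pred F) : all P Fl -> forall a, P a.
Proof. by move=> /allP H a; apply: H; apply: FlP. Qed.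

Lemma allF2 (P : F -> F -> bool) : all (fun a => all (P a) Fl) Fl -> forall a b, P a b.
Proof. by move=> H a; apply: allF; move: a; apply: allF. Qed.

Lemma fvD (a b : F) : fv (a + b) = ma (fv a) (fv b).
Proof. apply/eqP; move: a b; apply: allF2; by vm_compute. Qed.
Lemma fvM (a b : F) : fv (a * b) = mm (fv a) (fv b).
Proof. apply/eqP; move: a b; apply: allF2; by vm_compute. Qed.
Lemma fvN (a : F) : fv (- a) = mn (fv a).
Proof. apply/eqP; move: a; apply: allF; by vm_compute. Qed.
Lemma fv0 : fv 0 = 0%N. Proof. by []. Qed.

Lemma ofv_mkv a b c d : ofv (mkv a b c d) = (fv a, fv b, fv c, fv d).
Proof. by rewrite /ofv !mxE. Qed.

Lemma fv_inF n : (n < 3)%N -> fv (inF n) = n.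
Proof. by case: n => [|[|[|]]]. Qed.

Lemma menumP x : x \in menum ->
  [&& (x.1.1.1 < 3)%N, (x.1.1.2 < 3)%N, (x.1.2 < 3)%N & (x.2 < 3)%N].
Proof. by move: x; apply/allP; vm_compute. Qed.

Lemma mem_menum a b c d : (a < 3)%N -> (b < 3)%N -> (c < 3)%N -> (d < 3)%N ->
  (a, b, c, d) \in menum.
Proof.
have H : forall n, (n < 3)%N -> n \in Nl by case=> [|[|[|]]].
move=> /H ha /H hb /H hc /H hd.
by apply: allpairs_f => //; apply: allpairs_f => //; apply: allpairs_f.
Qed.

Lemma ofv_menum v : ofv v \in menum.
Proof. by apply: mem_menum; apply: fv_lt. Qed.

Lemma ofv_tov x : x \in menum -> ofv (tov x) = x.
Proof.
case: x => [[[a b] c] d] /menumP /= /and4P [ha hb hc hd].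
by rewrite ofv_mkv !fv_inF.
Qed.

Lemma I4P (j : 'I_4) : j \in [:: 0; 1; 2; 3%:R].
Proof.
by case: j => [[|[|[|[|n]]]] Hj].
Qed.

Lemma ofv_inj v w : ofv v = ofv w -> v = w.
Proof.
case=> /fv_inj e0 /fv_inj e1 /fv_inj e2 /fv_inj e3.
apply/rowP => j; have := I4P j; rewrite !inE.
by case/or4P => /eqP ->.
Qed.

Lemma tov_ofv v : tov (ofv v) = v.
Proof. by apply: ofv_inj; rewrite ofv_tov // ofv_menum. Qed.

Lemma ofv_eqE v w : (v == w) = (ofv v == ofv w).
Proof. by apply/eqP/eqP => [->|/ofv_inj]. Qed.

Definition rep (S : {set vec}) : seq mv := [seq x <- menum | tov x \in S].
Definition unrep (c : seq mv) : {set vec} := [set v | ofv v \in c].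

Lemma mem_rep (S : {set vec}) x : (x \in rep S) = (x \in menum) && (tov x \in S).
Proof. by rewrite mem_filter andbC. Qed.

Lemma mem_rep_ofv (S : {set vec}) v : (ofv v \in rep S) = (v \in S).
Proof. by rewrite mem_rep ofv_menum tov_ofv. Qed.

Lemma rep_eqE (S T : {set vec}) : (S == T) = (rep S == rep T).
Proof.
apply/eqP/eqP => [->//|H]; apply/setP => v.
by rewrite -!mem_rep_ofv H.
Qed.

Lemma rep_subE (S T : {set vec}) : (S \subset T) = all (mem (rep T)) (rep S).
Proof.
apply/subsetP/allP => H.
- move=> x; rewrite mem_rep => /andP [Hm /H HT] /=; by rewrite mem_rep Hm HT.
- move=> v; rewrite -!mem_rep_ofv; exact: H.
Qed.

Lemma rep_pred (S : {set vec}) (p : pred mv) : (forall v, (v \in S) = p (ofv v)) -> rep S = filter p menum.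
Proof.
move=> H; apply: eq_in_filter => x Hx.
by rewrite H ofv_tov.
Qed.

Lemma rep_unrep c : rep (unrep c) = filter (mem c) menum.
Proof. by apply: rep_pred => v; rewrite inE. Qed.

Lemma filter_menum (p : pred mv) : filter (mem (filter p menum)) menum = filter p menum.
Proof. apply: eq_in_filter => x Hx; have := mem_filter p x menum; rewrite Hx andbT; exact. Qed.

Lemma unrep_rep (S : {set vec}) : unrep (rep S) = S.
Proof. by apply/setP => v; rewrite inE mem_rep_ofv. Qed.

Lemma card_rep (s : seq (seq mv)) (q : pred (seq mv)) : uniq s ->
  (forall c, c \in s -> rep (unrep c) = c) ->
  #|[set S : {set vec} | (rep S \in s) && q (rep S)]| = count q s.
Proof.
move=> Us H.
have E : [set S : {set vec} | (rep S \in s) && q (rep S)] =i map unrep (filter q s).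
  move=> S; rewrite inE; apply/andP/mapP.
  - case=> Hs Hq; exists (rep S); first by rewrite mem_filter Hq Hs.
    by rewrite unrep_rep.
  - case=> c; rewrite mem_filter => /andP [Hq Hs] ->; rewrite H //.
have U : uniq (map unrep (filter q s)).
  rewrite map_inj_in_uniq ?filter_uniq // => c1 c2.
  rewrite !mem_filter => /andP [_ H1] /andP [_ H2] E12.
  by rewrite -(H c1 H1) -(H c2 H2) E12.
by rewrite (eq_card E) (card_uniqP U) size_map size_filter.
Qed.

Lemma eq_has' T (a b : pred T) s : (forall x, a x = b x) -> has a s = has b s.
Proof. by move=> H; apply: eq_has. Qed.
Lemma eq_all' T (a b : pred T) s : (forall x, a x = b x) -> all a s = all b s.
Proof. by move=> H; apply: eq_all. Qed.
Lemma eq_count' T (a b : pred T) s : (forall x, a x = b x) -> count a s = count b s.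
Proof. by move=> H; apply: eq_count. Qed.

Lemma exFE (p : pred F) : [exists a, p a] = has p Fl.
Proof.
apply/existsP/hasP => [[a Ha]|[a _ Ha]]; last by exists a.
by exists a => //; apply: FlP.
Qed.

Definition olF : seq (option F) := [:: None; Some 0; Some 1; Some 2%:R].
Lemma olFP (t : option F) : t \in olF.
Proof.
case: t => [a|] //; have := FlP a; rewrite !inE.
by case/or3P => /eqP ->.
Qed.
Lemma exOE (p : pred (option F)) : [exists t, p t] = has p olF.
Proof.
apply/existsP/hasP => [[a Ha]|[a _ Ha]]; last by exists a.
by exists a => //; apply: olFP.
Qed.
Lemma exVE (p : pred vec) : [exists v, p v] = has (fun x => p (tov x)) menum.
Proof.
apply/existsP/hasP => [[v Hv]|[x _ Hx]]; last by exists (tov x).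
by exists (ofv v); rewrite ?ofv_menum ?tov_ofv.
Qed.

Lemma card_optF (p : pred (option F)) : #|[set t | p t]| = count p olF.
Proof.
have E : [set t | p t] =i filter p olF by move=> t; rewrite inE mem_filter olFP andbT.
have U : uniq (filter p olF) by rewrite filter_uniq.
by rewrite (eq_card E) (card_uniqP U) size_filter.
Qed.

Lemma has_Fl (p : pred nat) : has (fun a => p (fv a)) Fl = has p Nl.
Proof. by rewrite -(has_map fv p). Qed.

Lemma mem_mapE (T U : eqType) (f : T -> U) s y : (y \in map f s) = has (fun x => y == f x) s.
Proof. rewrite -has_pred1 has_map; apply: eq_has' => x /=; exact: eq_sym. Qed.

Lemma ofv_scale a v : ofv (a *: v) = msc (fv a) (ofv v).
Proof. by rewrite /ofv !mxE !fvM. Qed.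
Lemma ofv_add u v : ofv (u + v) = madd (ofv u) (ofv v).
Proof. by rewrite /ofv !mxE !fvD. Qed.

Lemma sum4 (f : 'I_4 -> F) : \sum_(i < 4) f i = f 0 + f 1 + f 2 + f 3%:R.
Proof.
rewrite !big_ord_recr big_ord0 /= add0r.
by congr (_ + _ + _ + _); congr f; apply: val_inj.
Qed.

Definition mplane (c x : mv) : bool :=
  let: (c0, c1, c2, c3) := c in let: (x0, x1, x2, x3) := x in
  ma (ma (ma (mm c0 x0) (mm c1 x1)) (mm c2 x2)) (mm c3 x3) == 0%N.

Lemma mem_plane c v : (v \in plane c) = mplane (ofv c) (ofv v).
Proof. by rewrite inE sum4 fv_eqE !fvD !fvM. Qed.

Definition mMat (a b c d : nat) : seq (seq nat) :=
  [:: [:: m3 (a ^ 3); m3 (a ^ 2 * c); m3 (a * c ^ 2); m3 (c ^ 3)];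
      [:: 0; m3 (a ^ 2 * d + 2 * a * b * c); m3 (b * c ^ 2 + 2 * a * c * d); 0];
      [:: 0; m3 (b ^ 2 * c + 2 * a * b * d); m3 (a * d ^ 2 + 2 * b * c * d); 0];
      [:: m3 (b ^ 3); m3 (b ^ 2 * d); m3 (b * d ^ 2); m3 (d ^ 3)]]%N.

Definition I4l : seq 'I_4 := [:: 0; 1; 2; 3%:R].

Lemma allI (P : pred 'I_4) : all P I4l -> forall k, P k.
Proof. by move=> /allP H k; apply: H; apply: I4P. Qed.

Definition MlistF (a b c d : F) : seq (seq F) := [::
    [:: a ^+ 3; a ^+ 2 * c; a * c ^+ 2; c ^+ 3];
    [:: 3%:R * a ^+ 2 * b; a ^+ 2 * d + 2%:R * a * b * c;
        b * c ^+ 2 + 2%:R * a * c * d; 3%:R * c ^+ 2 * d];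
    [:: 3%:R * a * b ^+ 2; b ^+ 2 * c + 2%:R * a * b * d;
        a * d ^+ 2 + 2%:R * b * c * d; 3%:R * c * d ^+ 2];
    [:: b ^+ 3; b ^+ 2 * d; b * d ^+ 2; d ^+ 3]].

Lemma MabcdE a b c d (k j : 'I_4) : Mabcd a b c d k j = nth 0 (nth [::] (MlistF a b c d) k) j.
Proof. by rewrite mxE. Qed.

Lemma Ment_all : all (fun a => all (fun b => all (fun c => all (fun d =>
   let l := MlistF a b c d in let m := mMat (fv a) (fv b) (fv c) (fv d) in
   all (fun k : 'I_4 => all (fun j : 'I_4 =>
      fv (nth 0 (nth [::] l k) j) == nth 0%N (nth [::] m k) j) I4l) I4l) Fl) Fl) Fl) Fl.
Proof. by vm_compute. Qed.

Lemma Ment a b c d (k j : 'I_4) :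
  fv (Mabcd a b c d k j) = nth 0%N (nth [::] (mMat (fv a) (fv b) (fv c) (fv d)) k) j.
Proof.
rewrite MabcdE; apply/eqP.
have H1 := allP Ment_all a (FlP a).
have H2 := allP H1 b (FlP b).
have H3 := allP H2 c (FlP c).
have H4 := allP H3 d (FlP d).
have H5 := allP H4 k (I4P k).
have H6 := allP H5 j (I4P j).
exact: H6.
Qed.

Definition mmul (x : mv) (m : seq (seq nat)) : mv :=
  let: (x0, x1, x2, x3) := x in
  let e := fun k j => nth 0%N (nth [::] m k) j in
  let col := fun j => ma (ma (ma (mm x0 (e 0%N j)) (mm x1 (e 1%N j))) (mm x2 (e 2%N j))) (mm x3 (e 3%N j)) in
  (col 0%N, col 1%N, col 2%N, col 3%N).

Lemma ofv_mulM x a b c d :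
  ofv (x *m Mabcd a b c d) = mmul (ofv x) (mMat (fv a) (fv b) (fv c) (fv d)).
Proof.
have E : forall j, (x *m Mabcd a b c d) 0 j = \sum_k x 0 k * Mabcd a b c d k j.
  by move=> j; rewrite mxE.
by rewrite /ofv !E !sum4 !fvD !fvM !Ment.
Qed.

Definition img (m : seq (seq nat)) (l : seq mv) : seq mv :=
  let ys := [seq mmul y m | y <- l] in [seq z <- menum | z \in ys].

Lemma mem_Gimg a b c d (L0 : {set vec}) v :
  (v \in Gstar_image (Mabcd a b c d) L0) =
  (ofv v \in [seq mmul y (mMat (fv a) (fv b) (fv c) (fv d)) | y <- rep L0]).
Proof.
apply/imsetP/mapP.
- case=> x Hx ->; exists (ofv x); first by rewrite mem_rep_ofv.
  by rewrite ofv_mulM.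
- case=> y; rewrite mem_rep => /andP [Hm Hy] E; exists (tov y) => //.
  by apply: ofv_inj; rewrite E ofv_mulM ofv_tov.
Qed.

Lemma rep_Gimg a b c d (L0 : {set vec}) :
  rep (Gstar_image (Mabcd a b c d) L0) = img (mMat (fv a) (fv b) (fv c) (fv d)) (rep L0).
Proof. by apply: rep_pred => v; rewrite mem_Gimg. Qed.

Lemma fv_Nl (a : F) : fv a \in Nl.
Proof. by have := fv_lt a; case: (fv a) => [|[|[|]]]. Qed.

Lemma Nl_lt n : n \in Nl -> (n < 3)%N.
Proof. by rewrite !inE => /or3P [] /eqP ->. Qed.

Definition s1 (x : mv) : seq mv := let E := [seq msc n x | n <- Nl] in [seq y <- menum | y \in E].
Definition s2 (x y : mv) : seq mv :=
  let E := [seq madd (msc a x) (msc b y) | a <- Nl, b <- Nl] in [seq z <- menum | z \in E].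

Lemma mem_span1 v w : (w \in span1 v) = (ofv w \in [seq msc n (ofv v) | n <- Nl]).
Proof.
apply/imsetP/mapP.
- case=> a _ ->; exists (fv a); first exact: fv_Nl.
  by rewrite ofv_scale.
- case=> n Hn E; exists (inF n) => //.
  by apply: ofv_inj; rewrite E ofv_scale fv_inF // Nl_lt.
Qed.

Lemma rep_span1 v : rep (span1 v) = s1 (ofv v).
Proof. by apply: rep_pred => w; rewrite mem_span1. Qed.

Lemma mem_span2 u v w : (w \in span2 u v) =
  (ofv w \in [seq madd (msc a (ofv u)) (msc b (ofv v)) | a <- Nl, b <- Nl]).
Proof.
apply/imset2P/allpairsP.
- case=> a b _ _ ->; exists (fv a, fv b) => /=; split; try exact: fv_Nl.
  by rewrite ofv_add !ofv_scale.
- case=> [[n m]] /= [Hn Hm E]; exists (inF n) (inF m) => //.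
  by apply: ofv_inj; rewrite E ofv_add !ofv_scale !fv_inF // Nl_lt.
Qed.

Lemma rep_span2 u v : rep (span2 u v) = s2 (ofv u) (ofv v).
Proof. by apply: rep_pred => w; rewrite mem_span2. Qed.

Definition mPt (t : option F) : mv :=
  if t is Some t then let n := fv t in (m3 (n ^ 3), m3 (n ^ 2), n, 1)%N else (1, 0, 0, 0)%N.
Definition mosc (t : option F) : mv :=
  if t is Some t then let n := fv t in (1, 0, 0, mn (m3 (n ^ 3)))%N else (0, 0, 0, 1)%N.
Definition mtdir (t : option F) : mv :=
  if t is Some t then let n := fv t in (0, m3 (2 * n), 1, 0)%N else (0, 1, 0, 0)%N.

Lemma ofv_Pt t : ofv (Pt t) = mPt t.
Proof.
case: t => [t|]; last by rewrite /Pt ofv_mkv.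
rewrite /Pt ofv_mkv; apply/eqP; move: t; apply: allF; by vm_compute.
Qed.
Lemma ofv_osc t : ofv (osc t) = mosc t.
Proof.
case: t => [t|]; last by rewrite /osc ofv_mkv.
rewrite /osc ofv_mkv; apply/eqP; move: t; apply: allF; by vm_compute.
Qed.
Lemma ofv_tdir t : ofv (tdir t) = mtdir t.
Proof.
case: t => [t|]; last by rewrite /tdir ofv_mkv.
rewrite /tdir ofv_mkv; apply/eqP; move: t; apply: allF; by vm_compute.
Qed.

Definition mReIm (a b : F) : mv * mv :=
  let x := fv a in let y := fv b in
  let re2 := ma (mm x x) (mn (mm y y)) in
  let im2 := mm 2 (mm x y) in
  let re3 := ma (mm re2 x) (mn (mm im2 y)) in
  let im3 := ma (mm re2 y) (mm im2 x) in
  ((re3, re2, x, 1), (im3, im2, y, 0))%N.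

Lemma ofv_ReP a b : ofv (ReP a b) = (mReIm a b).1.
Proof.
rewrite /ReP ofv_mkv; apply/eqP; move: a b; apply: allF2; by vm_compute.
Qed.
Lemma ofv_ImP a b : ofv (ImP a b) = (mReIm a b).2.
Proof.
rewrite /ImP ofv_mkv; apply/eqP; move: a b; apply: allF2; by vm_compute.
Qed.

Definition mAl (x : mv) : bool := let: (x0, x1, x2, x3) := x in (x0 == 0%N) && (x3 == 0%N).
Lemma mem_Aline v : (v \in Aline) = mAl (ofv v).
Proof. by rewrite inE !fv_eqE. Qed.

Definition mU1 (x : mv) : bool := let: (x0, x1, x2, x3) := x in (x1 == mn x2) && (x1 == mn x3).
Definition mU2 (x : mv) : bool := let: (x0, x1, x2, x3) := x in (x2 == 0%N) && (x1 == mn x3).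
Definition mE2 (x : mv) : bool := let: (x0, x1, x2, x3) := x in (x0 == 0%N) && (x1 == mn x3).
Definition mE3 (x : mv) : bool := let: (x0, x1, x2, x3) := x in (x0 == x2) && (x3 == 0%N).
Definition mN3 (x : mv) : bool := let: (x0, x1, x2, x3) := x in (x0 == x2) && (x1 == mn x3).

Lemma rep_U1 : rep UnG1_rep = filter mU1 menum.
Proof. by apply: rep_pred => v; rewrite inE !fv_eqE !fvN. Qed.
Lemma rep_U2 : rep UnG2_rep = filter mU2 menum.
Proof. by apply: rep_pred => v; rewrite inE !fv_eqE !fvN. Qed.
Lemma rep_E2 : rep EA2_rep = filter mE2 menum.
Proof. by apply: rep_pred => v; rewrite inE !fv_eqE !fvN. Qed.
Lemma rep_E3 : rep EA3_rep = filter mE3 menum.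
Proof. by apply: rep_pred => v; rewrite inE !fv_eqE. Qed.
Lemma rep_N3 : rep EnG3_rep = filter mN3 menum.
Proof. by apply: rep_pred => v; rewrite inE !fv_eqE !fvN. Qed.
Lemma rep_Aline : rep Aline = filter mAl menum.
Proof. by apply: rep_pred => v; rewrite mem_Aline. Qed.
Lemma rep_plane c : rep (plane c) = filter (mplane (ofv c)) menum.
Proof. by apply: rep_pred => v; rewrite mem_plane. Qed.

Definition mdet (a b c d : nat) : bool := ma (mm a d) (mn (mm b c)) != 0%N.
Lemma detE (a b c d : F) : (a * d - b * c != 0) = mdet (fv a) (fv b) (fv c) (fv d).
Proof. by rewrite fv_eqE fvD fvN !fvM. Qed.

Fixpoint dedup (T : eqType) (s acc : seq T) : seq T :=
  if s is x :: s' then dedup s' (if x \in acc then acc else x :: acc) else acc.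

Lemma mem_dedup (T : eqType) (s acc : seq T) y :
  (y \in dedup s acc) = (y \in s) || (y \in acc).
Proof.
elim: s acc => [|x s IH] acc //=.
rewrite IH inE; case: ifP => H.
- by have [->|_] := eqVneq y x; rewrite ?H ?orbT //=.
- by rewrite inE; case: (y == x); case: (y \in s).
Qed.

Lemma uniq_dedup (T : eqType) (s acc : seq T) : uniq acc -> uniq (dedup s acc).
Proof.
elim: s acc => [|x s IH] acc //= U; apply: IH.
by case: ifP => //= ->.
Qed.

Definition m0 : mv := (0, 0, 0, 0)%N.
Definition rA : seq mv := filter mAl menum.
Definition OO : seq (option F * option F) := [seq (a, b) | a <- olF, b <- olF].
Definition FF : seq (F * F) := [seq (a, b) | a <- Fl, b <- Fl].
Definition F4l : seq (F * F * F * F) :=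
  [seq (x, d) | x <- [seq (y, c) | y <- [seq (a, b) | a <- Fl, b <- Fl], c <- Fl], d <- Fl].
Definition kdet (k : F * F * F * F) := let: (a, b, c, d) := k in mdet (fv a) (fv b) (fv c) (fv d).
Definition kimg (k : F * F * F * F) (l : seq mv) :=
  let: (a, b, c, d) := k in img (mMat (fv a) (fv b) (fv c) (fv d)) l.
Definition gorb (l : seq mv) : seq (seq mv) := [seq kimg k l | k <- F4l & kdet k].

Record K := MkK { kcp : seq (seq mv); kTan : seq (seq mv); kChord : seq (seq mv);
  kPl : seq (seq mv); kIC : seq (seq mv);
  oU1 : seq (seq mv); oU2 : seq (seq mv); oE2 : seq (seq mv);
  oE3 : seq (seq mv); oN3 : seq (seq mv) }.

Definition KV : K := MkK
  [seq s1 (mPt t) | t <- olF]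
  [seq s2 (mPt t) (mtdir t) | t <- olF]
  [seq s2 (mPt p.1) (mPt p.2) | p <- OO & p.1 != p.2]
  [seq filter (mplane (mosc t)) menum | t <- olF]
  [seq s2 (mReIm p.1 p.2).1 (mReIm p.1 p.2).2 | p <- FF & p.2 != 0]
  (gorb (filter mU1 menum)) (gorb (filter mU2 menum))
  (gorb (filter mE2 menum)) (gorb (filter mE3 menum)) (gorb (filter mN3 menum)).

Lemma KV_cp : kcp KV = [seq s1 (mPt t) | t <- olF]. Proof. by []. Qed.
Lemma KV_Tan : kTan KV = [seq s2 (mPt t) (mtdir t) | t <- olF]. Proof. by []. Qed.
Lemma KV_Chord : kChord KV = [seq s2 (mPt p.1) (mPt p.2) | p <- OO & p.1 != p.2]. Proof. by []. Qed.
Lemma KV_Pl : kPl KV = [seq filter (mplane (mosc t)) menum | t <- olF]. Proof. by []. Qed.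
Lemma KV_IC : kIC KV = [seq s2 (mReIm p.1 p.2).1 (mReIm p.1 p.2).2 | p <- FF & p.2 != 0]. Proof. by []. Qed.
Lemma KV_U1 : oU1 KV = gorb (filter mU1 menum). Proof. by []. Qed.
Lemma KV_U2 : oU2 KV = gorb (filter mU2 menum). Proof. by []. Qed.
Lemma KV_E2 : oE2 KV = gorb (filter mE2 menum). Proof. by []. Qed.
Lemma KV_E3 : oE3 KV = gorb (filter mE3 menum). Proof. by []. Qed.
Lemma KV_N3 : oN3 KV = gorb (filter mN3 menum). Proof. by []. Qed.

Section Model.
Variable k : K.
Definition mCp (c : seq mv) := c \in kcp k.
Definition mG4 (c : seq mv) := all (mem rA) c.
Definition mOnTan (c : seq mv) := has (fun l => all (mem l) c) (kTan k).
Definition mOnRC (c : seq mv) := has (fun l => all (mem l) c) (kChord k).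
Definition mTO c := [&& ~~ mCp c, ~~ mG4 c & mOnTan c].
Definition mRCp c := [&& ~~ mCp c, ~~ mG4 c, ~~ mOnTan c & mOnRC c].
Definition mICp c := [&& ~~ mCp c, ~~ mG4 c, ~~ mTO c & ~~ mRCp c].
Definition mM (j : nat) (c : seq mv) : bool :=
  match j with
  | 1 => mCp c
  | 2 => mG4 c || mICp c
  | 3 => mTO c
  | 4 => mRCp c
  | _ => false
  end%N.

Definition mRCl (c : seq mv) := c \in kChord k.
Definition mTr (c : seq mv) := c \in kTan k.
Definition mnc (c : seq mv) := count (fun p => all (mem c) p) (kcp k).
Definition mInG (c : seq mv) := has (fun pl => all (mem pl) c) (kPl k).
Definition mMeetA (c : seq mv) := has (fun x => [&& x != m0, x \in c & mAl x]) menum.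
Definition mIC (c : seq mv) := c \in kIC k.
Definition mUG c := [&& mnc c == 1%N, ~~ mTr c & mInG c].
Definition mEA c := [&& mnc c == 0%N, c != rA & mMeetA c].
Definition mEnG c := [&& mnc c == 0%N, ~~ mMeetA c & ~~ mIC c].
Definition mEA1 c := [&& mEA c, ~~ (c \in oE2 k) & ~~ (c \in oE3 k)].
Definition mEnGr c := mEnG c && ~~ (c \in oN3 k).
Definition mL (i : nat) (c : seq mv) : bool :=
  match i with
  | 1 => mRCl c
  | 2 => mEnGr c && (size (dedup (gorb c) [::]) == 12)
  | 3 => mTr c || (c \in oU2 k)
  | 4 => [|| mIC c, c == rA | c \in oE2 k]
  | 5 => mUG c || (c \in oU1 k)
  | 6 => mEA1 c || (mEnGr c && (size (dedup (gorb c) [::]) == 24))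
  | 7 => (c \in oE3 k) || (c \in oN3 k)
  | _ => false
  end%N.
End Model.

Lemma hasmap (T U : eqType) (f : T -> U) (q : pred T) (g : pred U) s :
  has (fun p => q p && g (f p)) s = has g [seq f p | p <- s & q p].
Proof.
apply/hasP/hasP => [[p Hp /andP [Hq Hg]]|[u /mapP [p Hp ->] Hg]].
- by exists (f p) => //; apply: map_f; rewrite mem_filter Hq.
- by move: Hp; rewrite mem_filter => /andP [Hq Hp]; exists p => //; rewrite Hq.
Qed.

Lemma memmap (T U : eqType) (f : T -> U) (q : pred T) s c :
  has (fun p => q p && (c == f p)) s = (c \in [seq f p | p <- s & q p]).
Proof.
rewrite -has_pred1 -hasmap; apply: eq_has' => p /=.
by rewrite eq_sym.
Qed.

Lemma ex2E (T : finType) (s : seq T) (Hs : forall x, x \in s) (r : T -> T -> bool) :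
  [exists x, exists y, r x y] = has (fun p => r p.1 p.2) [seq (x, y) | x <- s, y <- s].
Proof.
apply/existsP/hasP => [[x /existsP [y H]]|[[x y] _ H]].
- by exists (x, y) => //; apply: allpairs_f.
- by exists x; apply/existsP; exists y.
Qed.

Lemma ex2VE (r : vec -> vec -> bool) :
  [exists x, exists y, r x y] =
  has (fun p => r (tov p.1) (tov p.2)) [seq (x, y) | x <- menum, y <- menum].
Proof.
apply/existsP/hasP => [[x /existsP [y H]]|[[x y] _ H]].
- exists (ofv x, ofv y); first by apply: allpairs_f; apply: ofv_menum.
  by rewrite !tov_ofv.
- by exists (tov x); apply/existsP; exists (tov y).
Qed.

Lemma ofv0 : ofv 0 = m0.
Proof. by rewrite /ofv !mxE. Qed.

Lemma tov_nz x : x \in menum -> (tov x != 0) = (x != m0).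
Proof. by move=> Hx; rewrite ofv_eqE ofv_tov // ofv0. Qed.

Lemma rep_unrep_f (p : pred mv) : rep (unrep (filter p menum)) = filter p menum.
Proof. by rewrite rep_unrep filter_menum. Qed.

Lemma s1E x : s1 x = filter (mem [seq msc n x | n <- Nl]) menum. Proof. by []. Qed.
Lemma s2E x y : s2 x y = filter (mem [seq madd (msc a x) (msc b y) | a <- Nl, b <- Nl]) menum.
Proof. by []. Qed.
Lemma imgE m l : img m l = filter (mem [seq mmul y m | y <- l]) menum. Proof. by []. Qed.

Lemma CpointE P : Cpoint P = mCp KV (rep P).
Proof.
rewrite /Cpoint exOE /mCp KV_cp mem_mapE; apply: eq_has' => t.
by rewrite rep_eqE rep_span1 ofv_Pt.
Qed.
Lemma Gamma4E P : Gamma4point P = mG4 (rep P).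
Proof. by rewrite /Gamma4point rep_subE rep_Aline. Qed.
Lemma OnTanE P : on_tangent P = mOnTan KV (rep P).
Proof.
rewrite /on_tangent exOE /mOnTan KV_Tan has_map; apply: eq_has' => t /=.
by rewrite rep_subE /tangent rep_span2 ofv_Pt ofv_tdir.
Qed.
Lemma OnRCE P : on_real_chord P = mOnRC KV (rep P).
Proof.
rewrite /on_real_chord (ex2E olFP) /mOnRC KV_Chord -hasmap; apply: eq_has' => p /=.
by rewrite rep_subE rep_span2 !ofv_Pt.
Qed.

Lemma MclassE j P : Mclass j P = mM KV j (rep P).
Proof.
case: j => [|[|[|[|[|j]]]]] //=;
  by rewrite /ICpoint /TOpoint /RCpoint ?CpointE ?Gamma4E ?OnTanE ?OnRCE.
Qed.

Lemma RCE L : RC_line L = mRCl KV (rep L).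
Proof.
rewrite /RC_line (ex2E olFP) /mRCl KV_Chord -memmap; apply: eq_has' => p /=.
by rewrite rep_eqE rep_span2 !ofv_Pt.
Qed.
Lemma TrE L : Tr_line L = mTr KV (rep L).
Proof.
rewrite /Tr_line exOE /mTr KV_Tan mem_mapE; apply: eq_has' => t.
by rewrite rep_eqE /tangent rep_span2 ofv_Pt ofv_tdir.
Qed.
Lemma ncE L : ncurve L = mnc KV (rep L).
Proof.
rewrite /ncurve card_optF /mnc KV_cp count_map; apply: eq_count' => t /=.
by rewrite rep_subE rep_span1 ofv_Pt.
Qed.
Lemma InGE L : in_Gamma_plane L = mInG KV (rep L).
Proof.
rewrite /in_Gamma_plane exOE /mInG KV_Pl has_map; apply: eq_has' => t.
by rewrite rep_subE rep_plane ofv_osc.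
Qed.
Lemma meetE L : meets_A L = mMeetA (rep L).
Proof.
rewrite /meets_A exVE /mMeetA; apply: eq_in_has => x Hx /=.
by rewrite tov_nz // mem_Aline ofv_tov // mem_rep Hx.
Qed.
Lemma ICE L : IC_line L = mIC KV (rep L).
Proof.
rewrite /IC_line (ex2E FlP) /mIC KV_IC -memmap; apply: eq_has' => p /=.
by rewrite rep_eqE rep_span2 ofv_ReP ofv_ImP.
Qed.

Lemma F4lP (a b c d : F) : (a, b, c, d) \in F4l.
Proof.
apply/allpairsP; exists ((a, b, c), d); split => //; last exact: FlP.
apply/allpairsP; exists ((a, b), c); split => //; last exact: FlP.
by apply/allpairsP; exists (a, b); split => //; apply: FlP.
Qed.

Lemma orbE L0 L : in_Gstar_orbit L0 L = (rep L \in gorb (rep L0)).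
Proof.
apply/idP/idP.
- case/existsP => a /existsP [b /existsP [c /existsP [d /andP [Hd /eqP ->]]]].
  rewrite rep_Gimg; apply/mapP; exists (a, b, c, d) => //.
  by rewrite mem_filter F4lP andbT /kdet /= -detE.
- case/mapP => [[[[a b] c] d]]; rewrite mem_filter /= -detE => /andP [Hd _] E.
  apply/existsP; exists a; apply/existsP; exists b; apply/existsP; exists c.
  apply/existsP; exists d.
  by rewrite Hd rep_eqE rep_Gimg E; apply/eqP.
Qed.


Lemma cardOrb L : #|Gstar_orbit L| = size (dedup (gorb (rep L)) [::]).
Proof.
rewrite /Gstar_orbit.
have -> : [set L' | in_Gstar_orbit L L'] =
          [set S | (rep S \in dedup (gorb (rep L)) [::]) && predT (rep S)].
  apply/setP => S; rewrite inE inE orbE mem_dedup orbF.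
  exact: (esym (andbT _)).
rewrite card_rep; first by rewrite count_predT.
  by apply: uniq_dedup.
move=> c.
rewrite mem_dedup orbF => /mapP [[[[a b] c'] d] _ ->] /=.
by rewrite imgE rep_unrep_f.
Qed.

Lemma LclassE i L : Lclass i L = mL KV i (rep L).
Proof.
case: i => [|[|[|[|[|[|[|[|i]]]]]]]]; rewrite /Lclass /mL; cbv iota beta; rewrite /mEA1 /mEnGr /mEnG /mEA /mUG ?KV_N3 ?KV_E2 ?KV_E3 ?KV_U1 ?KV_U2 /rA.
- by [].
- exact: RCE.
- by rewrite /EnGamma2 /EnGamma_rest /EnGamma /EnGamma3 ncE meetE ICE orbE rep_N3 cardOrb.
 
- by rewrite TrE /UnGamma2 orbE rep_U2.
- by rewrite ICE rep_eqE rep_Aline /EA2 orbE rep_E2.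
- by rewrite /UGamma ncE TrE InGE /UnGamma1 orbE rep_U1.
- by rewrite /EA1 /EA_line /EA2 /EA3 /EnGamma1 /EnGamma_rest /EnGamma /EnGamma3
     ncE meetE ICE rep_eqE rep_Aline !orbE rep_E2 rep_E3 rep_N3 cardOrb.
- by rewrite /EA3 /EnGamma3 !orbE rep_E3 rep_N3.
- by [].
Qed.

Definition PL : seq (seq mv) := dedup [seq s1 x | x <- menum & x != m0] [::].
Definition MM : seq (mv * mv) := [seq (x, y) | x <- menum, y <- menum].
Definition LL : seq (seq mv) :=
  dedup [seq s2 p.1 p.2 | p <- MM & (p.1 != m0) && (p.2 \notin s1 p.1)] [::].

Lemma is_pointE P : is_point P = (rep P \in PL).
Proof.
rewrite /is_point exVE /PL mem_dedup orbF -memmap; apply: eq_in_has => x Hx; cbv beta.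
by rewrite tov_nz // rep_eqE rep_span1 ofv_tov.
Qed.

Lemma span1_memE x y : x \in menum -> y \in menum ->
  (tov y \in span1 (tov x)) = (y \in s1 x).
Proof. by move=> Hx Hy; rewrite -mem_rep_ofv rep_span1 !ofv_tov. Qed.

Lemma is_lineE L : is_line L = (rep L \in LL).
Proof.
rewrite /is_line ex2VE /LL mem_dedup orbF -memmap; apply: eq_in_has => p Hp; cbv beta.
case/allpairsP: Hp => [[x y] [Hx Hy ->]].
rewrite tov_nz // span1_memE // rep_eqE rep_span2 !ofv_tov //.
by rewrite andbA.
Qed.

Lemma PL_valid c : c \in PL -> rep (unrep c) = c.
Proof. by rewrite /PL mem_dedup orbF => /mapP [x _ ->]; rewrite s1E rep_unrep_f. Qed.
Lemma LL_valid c : c \in LL -> rep (unrep c) = c.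
Proof. by rewrite /LL mem_dedup orbF => /mapP [x _ ->]; rewrite s2E rep_unrep_f. Qed.

Definition LCf (k : K) := [seq (c, [seq mL k i c | i <- iota 1 7]) | c <- LL].
Definition PCf (k : K) := [seq (p, [seq mM k j p | j <- iota 1 4]) | p <- PL].

Definition checkF (lc pc : seq (seq mv * seq bool)) : bool :=
  all (fun cl => all (fun i => nth false cl.2 i.-1 ==> all (fun j =>
         count (fun pp => nth false pp.2 j.-1 && all (mem cl.1) pp.1) pc == (tb i j).1)
       (iota 1 4)) (iota 1 7)) lc
  && all (fun pp => all (fun j => nth false pp.2 j.-1 ==> all (fun i =>
         count (fun cl => nth false cl.2 i.-1 && all (mem cl.1) pp.1) lc == (tb i j).2)
       (iota 1 7)) (iota 1 4)) pc.

Lemma check_ok : checkF (LCf KV) (PCf KV).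
Proof. vm_compute. reflexivity. Qed.

Lemma nth_cls (f : nat -> bool) n i : (1 <= i <= n)%N ->
  nth false [seq f k | k <- iota 1 n] i.-1 = f i.
Proof.
case: i => [//|i] /andP [_ H].
by rewrite (nth_map 0%N) ?size_iota // nth_iota // add1n.
Qed.

Lemma count_pairs (T U : Type) (F : T -> U) (g : U -> bool) (h : T -> bool) s :
  count (fun pp => g pp.2 && h pp.1) [seq (x, F x) | x <- s] =
  count (fun x => g (F x) && h x) s.
Proof. by elim: s => //= x s ->. Qed.

Lemma uniq_PL : uniq PL.
Proof. rewrite /PL; exact: (@uniq_dedup _ _ [::]). Qed.
Lemma uniq_LL : uniq LL.
Proof. rewrite /LL; exact: (@uniq_dedup _ _ [::]). Qed.

Local Close Scope ring_scope.

Theorem mainTheorem12 :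
  forall i j : nat, (1 <= i <= 7)%N -> (1 <= j <= 4)%N ->
    (forall L : {set vec}, is_line L -> Lclass i L ->
       #|[set P : {set vec} | [&& is_point P, Mclass j P & P \subset L]]| = (tb i j).1)
    /\
    (forall P : {set vec}, is_point P -> Mclass j P ->
       #|[set L : {set vec} | [&& is_line L, Lclass i L & P \subset L]]| = (tb i j).2).
Proof.
move=> i j Hi Hj.
have Hi' : i \in iota 1 7 by rewrite mem_iota.
have Hj' : j \in iota 1 4 by rewrite mem_iota.
split.
- move=> L HL HLc.
  rewrite is_lineE in HL; rewrite LclassE in HLc.
  pose q : pred (seq mv) := fun c => mM KV j c && all (mem (rep L)) c.
  have -> : [set P : {set vec} | [&& is_point P, Mclass j P & P \subset L]] =
            [set P | (rep P \in PL) && q (rep P)].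
    apply/setP => P0.
    apply: etrans (in_set _ P0) _; apply: etrans _ (esym (in_set _ P0)).
    rewrite is_pointE MclassE rep_subE; reflexivity.
  rewrite card_rep; last first.
  + exact: PL_valid.
  + exact: uniq_PL.
  move: (check_ok) => /andP [C1 _].
  move: (allP C1 _ (map_f (fun c => (c, [seq mL KV i c | i <- iota 1 7])) HL)) => {C1}.
  cbv beta => /allP /(_ i Hi') /implyP.
  rewrite nth_cls; last exact: Hi.
  move=> /(_ HLc) /allP /(_ j Hj') /eqP <-.
  rewrite /PCf (@count_pairs _ _ (fun p => [seq mM KV j p | j <- iota 1 4]) (fun l => nth false l j.-1) (fun x => all (mem (rep L)) x) PL) /q; apply: eq_count' => p; cbv beta.
  rewrite nth_cls; [reflexivity | exact: Hj].
- move=> P HP HPc.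
  rewrite is_pointE in HP; rewrite MclassE in HPc.
  pose q : pred (seq mv) := fun c => mL KV i c && all (mem c) (rep P).
  have -> : [set L : {set vec} | [&& is_line L, Lclass i L & P \subset L]] =
            [set L | (rep L \in LL) && q (rep L)].
    apply/setP => L0.
    apply: etrans (in_set _ L0) _; apply: etrans _ (esym (in_set _ L0)).
    rewrite is_lineE LclassE rep_subE; reflexivity.
  rewrite card_rep; last first.
  + exact: LL_valid.
  + exact: uniq_LL.
  move: (check_ok) => /andP [_ C2].
  move: (allP C2 _ (map_f (fun p => (p, [seq mM KV j p | j <- iota 1 4])) HP)) => {C2}.
  cbv beta => /allP /(_ j Hj') /implyP.
  rewrite nth_cls; last exact: Hj.
  move=> /(_ HPc) /allP /(_ i Hi') /eqP <-.
  rewrite /LCf (@count_pairs _ _ (fun c => [seq mL KV i c | i <- iota 1 7]) (fun l => nth false l i.-1) (fun x => all (mem x) (rep P)) LL) /q; apply: eq_count' => c; cbv beta.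
  rewrite nth_cls; [reflexivity | exact: Hi].
Qed.
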